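(* Assume Hypothesis 1 (stated in the context). Suppose further that $C\ne C_{\max}$, let $n$ be the integer with $|C|=n|C_{\max}|$, and let $\langle C\rangle$ be the $\mathbb F_2$-span of the codewords of $C$. Then: 1. $\mathrm{Aut}(C)\le\mathrm{Aut}(\langle C\rangle)$; 2. $\langle C\rangle$ is completely transitive; 3. the codimension of $C_{\max}$ in $\langle C\rangle$ is at least $2$ and at most $n-1$.
   Context: $H(m,2)$: vertex set $\mathbb F_2^m$, coordinates indexed by a set $M$, $|M|=m$; $d$ Hamming distance. For a code $C$: minimum distance $\delta$, covering radius $\rho=\max_\alpha d(\alpha,C)$, $C_i=\{\alpha:d(\alpha,C)=i\}$. $\mathrm{Aut}(H(m,2))=B\rtimes L$, $B\cong\mathbb Z_2^m$ translations, $L\cong\mathrm{Sym}(M)$; $\mathrm{Aut}(C)$ is the setwise stabiliser of $C$. $C$ is completely transitive if $\mathrm{Aut}(C)$ is transitive on each of $C,C_1,\dots,C_\rho$. For a linear code $D$, $T_D$ is the group of translations by elements of $D$. For $C\ni\mathbf 0$, the maximal linear subcode $C_{\max}$ is the largest linear subcode $D\subseteq C$ with $T_D\le\mathrm{Aut}(C)$. Hypothesis 1: $C$ is a completely transitive code in $H(m,2)$ with $\mathbf 0\in C$ and minimum distance $\delta\ge5$; $X=\mathrm{Aut}(C)$; $C_{\max}$ is the maximal linear subcode with minimum distance $\delta_{\max}$; $X_{\max}$ is the setwise stabiliser of $C_{\max}$ in $X$; $2\le\dim C_{\max}\le m-2$. *)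

(* Defs.v *)
(* Binary Hamming scheme H(m,2) with vertex set 'rV['F_2]_m. *)
From HB Require Import structures.
From mathcomp Require Import all_boot all_order all_algebra all_fingroup.
Set Implicit Arguments. Unset Strict Implicit. Unset Printing Implicit Defensive.
Import GRing.Theory.
Local Open Scope ring_scope.

Section Hamming.
Variable m : nat.
Notation vec := 'rV['F_2]_m.
Notation code := {set vec}.

Definition hdist (x y : vec) : nat := #|[set i : 'I_m | x 0 i != y 0 i]|.

(* distance from a vertex to a code (m is an upper bound, used only for C empty) *)
Definition dist_code (x : vec) (C : code) : nat :=
  \big[minn/m]_(c in C) hdist x c.

Definition cov_radius (C : code) : nat := \max_(x : vec) dist_code x C.

Definition dist_class (C : code) (i : nat) : code := [set x | dist_code x C == i].

(* Aut(H(m,2)) = B x| L : pairs (sigma, b) acting by x |-> (x permuted by sigma) + b *)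
Definition haut := ({perm 'I_m} * vec)%type.
Definition hact (g : haut) (x : vec) : vec := col_perm g.1 x + g.2.

Definition CAut (C : code) : {set haut} := [set g | hact g @: C == C].

Definition transl (d : vec) : haut := (1%g, d).

Definition completely_transitive (C : code) : Prop :=
  forall i, (i <= cov_radius C)%N ->
    forall x y, x \in dist_class C i -> y \in dist_class C i ->
      exists2 g, g \in CAut C & hact g x = y.

Definition span_mx (C : code) := (\sum_(c in C) <<c>>)%MS.
Definition cspan (C : code) : code := [set x | (x <= span_mx C)%MS].

Definition linear_code (D : code) : Prop := cspan D = D.
Definition dim_code (D : code) : nat := \rank (span_mx D).

Definition transl_subcode (C D : code) : Prop :=
  [/\ linear_code D, D \subset C & forall d, d \in D -> transl d \in CAut C].

Definition is_Cmax (C D : code) : Prop :=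
  transl_subcode C D /\ forall D', transl_subcode C D' -> D' \subset D.

End Hamming.

(* Main.v *)
Require Import Defs.
From mathcomp Require Import all_boot all_order all_algebra all_fingroup.
Set Implicit Arguments. Unset Strict Implicit. Unset Printing Implicit Defensive.
Import GRing.Theory.


Section Helpers.
Local Open Scope ring_scope.

Lemma F2_cases (a : 'F_2) : a = 0 \/ a = 1.
Proof. case: a => [[|[|//]]] H; [left|right]; exact/val_inj. Qed.
Lemma F2_aa (a : 'F_2) : a + a = 0.
Proof. by case: (F2_cases a) => ->; apply/val_inj. Qed.

Lemma vaddxx m (x : 'rV['F_2]_m) : x + x = 0.
Proof. by apply/matrixP => i j; rewrite !mxE F2_aa. Qed.

Lemma vaddK m (x y : 'rV['F_2]_m) : x + y + y = x.
Proof. by rewrite -addrA vaddxx addr0. Qed.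

Lemma bigmin_le (T : eqType) (r : seq T) (P : pred T) (F : T -> nat) a c :
  c \in r -> P c -> (\big[minn/a]_(i <- r | P i) F i <= F c)%N.
Proof.
elim: r => // x r IH; rewrite inE big_cons => /orP [/eqP-> -> | cr Pc].
  exact: geq_minl.
case: (P x); last exact: IH.
exact: leq_trans (geq_minr _ _) (IH cr Pc).
Qed.

Lemma bigmin_ex (T : eqType) (r : seq T) (P : pred T) (F : T -> nat) a :
  \big[minn/a]_(i <- r | P i) F i = a \/
  exists2 i, (i \in r) && P i & \big[minn/a]_(i <- r | P i) F i = F i.
Proof.
elim: r => [|x r IH]; first by left; rewrite big_nil.
rewrite big_cons; case Px: (P x); last first.
  case: IH => [->|[i /andP[ir Pi] ->]]; [by left | right; exists i => //].
  by rewrite inE ir orbT.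
rewrite /minn; case: ifP => _; first by right; exists x; rewrite ?inE ?eqxx ?Px.
case: IH => [->|[i /andP[ir Pi] ->]]; [by left | right; exists i => //].
by rewrite inE ir orbT.
Qed.

Lemma hdist_le m (x y : 'rV['F_2]_m) : (hdist x y <= m)%N.
Proof. by rewrite /hdist; apply: leq_trans (max_card _) _; rewrite card_ord. Qed.

Lemma dc_le m (x c : 'rV['F_2]_m) (C : {set 'rV['F_2]_m}) : c \in C -> (dist_code x C <= hdist x c)%N.
Proof. by move=> Hc; apply: bigmin_le => //; rewrite mem_index_enum. Qed.

Lemma dc_ex m (x c0 : 'rV['F_2]_m) (C : {set 'rV['F_2]_m}) : c0 \in C ->
  exists2 c, c \in C & dist_code x C = hdist x c.
Proof.
move=> Hc0; case: (bigmin_ex (index_enum _) (fun c => c \in C) (hdist x) m).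
  move=> H; exists c0 => //; apply/eqP; rewrite eqn_leq dc_le //.
  by rewrite /dist_code H hdist_le.
by case=> c /andP[_ Hc] H; exists c.
Qed.

Lemma hdistD m (x y d : 'rV['F_2]_m) : hdist (x + d) (y + d) = hdist x y.
Proof.
rewrite /hdist; apply: eq_card => i; rewrite !inE !mxE.
by rewrite (inj_eq (addIr _)).
Qed.

Lemma csub_span m (C : {set 'rV['F_2]_m}) c : c \in C -> (c <= span_mx C)%MS.
Proof. by move=> Hc; apply: (sumsmx_sup c) => //; rewrite genmxE. Qed.

Lemma mem_cspan m (C : {set 'rV['F_2]_m}) c : c \in C -> c \in cspan C.
Proof. by move=> Hc; rewrite inE csub_span. Qed.

Lemma cspan_add m (C : {set 'rV['F_2]_m}) x y :
  x \in cspan C -> y \in cspan C -> x + y \in cspan C.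
Proof. by rewrite !inE; apply: addmx_sub. Qed.

Lemma cspan0 m (C : {set 'rV['F_2]_m}) : 0 \in cspan C.
Proof. by rewrite inE sub0mx. Qed.

Lemma span_sub m (C : {set 'rV['F_2]_m}) k (M : 'M_(k, m)) :
  (forall c, c \in C -> (c <= M)%MS) -> (span_mx C <= M)%MS.
Proof. by move=> H; apply/sumsmx_subP => c Hc; rewrite genmxE H. Qed.

Lemma span_cspan m (C : {set 'rV['F_2]_m}) : (span_mx (cspan C) == span_mx C)%MS.
Proof.
apply/andP; split; apply: span_sub => c; first by rewrite inE.
by move/mem_cspan/csub_span.
Qed.

Lemma dim_cspan m (C : {set 'rV['F_2]_m}) : dim_code (cspan C) = dim_code C.
Proof. by rewrite /dim_code (eqmxP (span_cspan C)). Qed.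

Lemma cspan_cspan m (C : {set 'rV['F_2]_m}) : cspan (cspan C) = cspan C.
Proof. by apply/setP => x; rewrite !inE (eqmxP (span_cspan C)). Qed.

Lemma lin_add m (K : {set 'rV['F_2]_m}) x y :
  linear_code K -> x \in K -> y \in K -> x + y \in K.
Proof. by move=> HK; rewrite -HK; apply: cspan_add. Qed.

Lemma col_perm_inj m (s : {perm 'I_m}) : injective (@col_perm 'F_2 1 m s).
Proof.
move=> x y /(congr1 (col_perm s^-1)); rewrite -!col_permM.
by rewrite mulVg !col_perm1.
Qed.

Lemma col_permD m (s : {perm 'I_m}) (x y : 'rV['F_2]_m) :
  col_perm s (x + y) = col_perm s x + col_perm s y.
Proof. by rewrite !col_permE mulmxDl. Qed.

Lemma col_perm0 m (s : {perm 'I_m}) : col_perm s (0 : 'rV['F_2]_m) = 0.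
Proof. by rewrite col_permE mul0mx. Qed.

Lemma hact_inj m (g : haut m) : injective (hact g).
Proof. by move=> x y /addIr /col_perm_inj. Qed.

Lemma CAut_fix m (g : haut m) (D : {set 'rV['F_2]_m}) : hact g @: D \subset D -> g \in CAut D.
Proof.
move=> H; rewrite inE eqEcard H /= card_imset //; exact: hact_inj.
Qed.

Lemma CAut_mem m (g : haut m) (D : {set 'rV['F_2]_m}) x : g \in CAut D -> x \in D -> hact g x \in D.
Proof. by rewrite inE => /eqP {2}<- Hx; apply: imset_f. Qed.

Lemma hact_transl m (d z : 'rV['F_2]_m) : hact (transl d) z = z + d.
Proof. by rewrite /hact /= col_perm1. Qed.

End Helpers.
Section P12.
Local Open Scope ring_scope.

Lemma part1 m (C : {set 'rV['F_2]_m}) : 0 \in C -> CAut C \subset CAut (cspan C).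
Proof.
move=> C0; apply/subsetP => g Hg; apply: CAut_fix.
apply/subsetP => _ /imsetP [z Hz ->].
have Hb : g.2 \in C by have := CAut_mem Hg C0; rewrite /hact col_perm0 add0r.
have Hc : forall c, c \in C -> col_perm g.1 c \in cspan C.
  move=> c Hc; have -> : col_perm g.1 c = hact g c + g.2 by rewrite /hact vaddK.
  by apply: cspan_add; apply: mem_cspan => //; apply: CAut_mem.
apply: cspan_add; last exact: mem_cspan.
move: Hz; rewrite !inE col_permE => Hz.
apply: submx_trans (submxMr _ Hz) _.
rewrite /span_mx sumsmxMr; apply/sumsmx_subP => c Hc'.
rewrite (eqmxMr _ (genmxE c)) -col_permE.
by have := Hc c Hc'; rewrite inE.
Qed.

Lemma near_C m (C : {set 'rV['F_2]_m}) x : 0 \in C ->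
  exists2 d, d \in cspan C & dist_code (x + d) C = dist_code x (cspan C).
Proof.
move=> C0; have [d Hd Hxd] := dc_ex x (cspan0 C).
exists d => //; apply/eqP; rewrite eqn_leq; apply/andP; split.
  apply: leq_trans (dc_le _ C0) _.
  by rewrite Hxd -(hdistD _ _ d) add0r vaddK.
have [c Hc ->] := dc_ex (x + d) C0.
rewrite -(hdistD _ _ d) vaddK; apply: dc_le.
by apply: cspan_add => //; apply: mem_cspan.
Qed.

Lemma part2 m (C : {set 'rV['F_2]_m}) : 0 \in C ->
  completely_transitive C -> completely_transitive (cspan C).
Proof.
move=> C0 CT i _ x y; rewrite !inE => /eqP Hx /eqP Hy.
have [d Hd Hxd] := near_C x C0.
have [e He Hye] := near_C y C0.
have Hi : (i <= cov_radius C)%N by rewrite /cov_radius -Hx -Hxd (leq_bigmax (F := fun z => dist_code z C)).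
have Hx' : x + d \in dist_class C i by rewrite inE Hxd Hx.
have Hy' : y + e \in dist_class C i by rewrite inE Hye Hy.
have [g Hg Hgxy] := CT i Hi (x + d) (y + e) Hx' Hy'.
have HgD : g \in CAut (cspan C) by apply: (subsetP (part1 C0)).
have Hb : g.2 \in cspan C
  by have := CAut_mem HgD (cspan0 C); rewrite /hact col_perm0 add0r.
have Ht : col_perm g.1 d + e \in cspan C.
  apply: cspan_add => //.
  have -> : col_perm g.1 d = hact g d + g.2 by rewrite /hact vaddK.
  by apply: cspan_add => //; apply: CAut_mem.
exists (g.1, g.2 + (col_perm g.1 d + e)).
  apply: CAut_fix; apply/subsetP => _ /imsetP [z Hz ->].
  rewrite /hact /= addrA; apply: cspan_add => //.
  exact: (CAut_mem HgD Hz).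
rewrite /hact /= addrA addrA.
move: Hgxy; rewrite /hact /= col_permD => Hgxy.
rewrite -(addrC (col_perm g.1 d)) addrA -(addrC (col_perm g.1 x)) Hgxy.
by rewrite vaddK.
Qed.

End P12.
Section P3.
Local Open Scope ring_scope.

Lemma rank_sum_le m (T : {set 'rV['F_2]_m}) :
  (\rank (\sum_(t in T) <<t>>)%MS <= #|T|)%N.
Proof.
rewrite -sum1_card.
apply: (big_ind2 (fun (M : 'M_m) k => \rank M <= k)%N).
- by rewrite mxrank0.
- move=> A1 k1 A2 k2 H1 H2; apply: leq_trans (mxrank_adds_leqif _ _) _.
  exact: leq_add.
- by move=> t _; rewrite mxrank_gen rank_leq_row.
Qed.

Lemma part3 m (C K : {set 'rV['F_2]_m}) (n : nat) :
  0 \in C -> is_Cmax C K -> C != K -> #|C| = (n * #|K|)%N ->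
  (2 <= dim_code (cspan C) - dim_code K <= n - 1)%N.
Proof.
move=> C0 [[HK KC Ktr] Kmax] CK Hn.
have K0 : 0 \in K by rewrite -HK cspan0.
have CKadd : forall c k, c \in C -> k \in K -> c + k \in C.
  by move=> c k Hc Hk; rewrite -hact_transl; apply: CAut_mem (Ktr _ Hk) Hc.
rewrite dim_cspan /dim_code; set W := span_mx K; set S := span_mx C.
have WS : (W <= S)%MS.
  apply: span_sub => k Hk; exact: (csub_span (subsetP KC _ Hk)).
have memK : forall x, (x <= W)%MS -> x \in K by move=> x Hx; rewrite -HK inE.
apply/andP; split.
  have /subsetPn [c Hc cK] : ~~ (C \subset K).
    by move: CK; apply: contraNN => H; rewrite eqEsubset H KC.
  have cW : ~~ (c <= W)%MS by apply: contra cK; apply: memK.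
  have ltW : (W < W + c)%MS by rewrite ltmxE addsmxSl addsmx_sub submx_refl.
  have WcS : (W + c <= S)%MS by rewrite addsmx_sub WS csub_span.
  rewrite leq_subRL; last by apply: mxrankS.
  rewrite addn2 ltnNge; apply/negP => HS.
  have lt1 := rank_ltmx ltW.
  have SWc : (S <= W + c)%MS.
    rewrite -(geq_leqif (mxrank_leqif_sup WcS)).
    by apply: leq_trans HS _.
  have CC : cspan C = C.
    apply/setP => x; apply/idP/idP; last exact: mem_cspan.
    rewrite inE => Hx; move: (submx_trans Hx SWc) => /sub_addsmxP [[u v] /= ->].
    have Hu : u *m W \in K by apply: memK; apply: submxMl.
    have : (v *m c <= c)%MS by apply: submxMl.
    case/sub_rVP => a ->; case: (F2_cases a) => ->.
      by rewrite scale0r addr0; apply: (subsetP KC).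
    by rewrite scale1r addrC; apply: CKadd.
  have CsubK : C \subset K.
    apply: Kmax; split => //.
    move=> d Hd; apply: CAut_fix; apply/subsetP => _ /imsetP [z Hz ->].
    by rewrite hact_transl -CC; apply: cspan_add; rewrite CC.
  by move: CK; rewrite eqEsubset CsubK KC.
pose f (c : 'rV['F_2]_m) := odflt c [pick y | y + c \in K].
have fP : forall c, f c + c \in K.
  by move=> c; rewrite /f; case: pickP => [y /= ->|_] //=; rewrite vaddxx.
have feq : forall c c', c + c' \in K -> f c = f c'.
  move=> c c' Hcc; rewrite /f.
  have E : (fun y => y + c \in K) =1 (fun y => y + c' \in K).
    move=> y /=; apply/idP/idP => Hy.
      have -> : y + c' = (y + c) + (c + c') by rewrite addrA vaddK.
      exact: lin_add.
    have -> : y + c = (y + c') + (c + c') by rewrite (addrC c c') addrA vaddK.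
    exact: lin_add.
  rewrite (eq_pick E); case: pickP => [//|H].
  by have := H c'; rewrite /= vaddxx K0.
have fC : forall c, c \in C -> f c \in C.
  by move=> c Hc; rewrite -(vaddK (f c) c) addrC; apply: CKadd.
have ffc : forall c, f (f c) = f c by move=> c; apply: feq.
pose T := f @: C.
have cardC : #|C| = (#|T| * #|K|)%N.
  rewrite -sum_nat_const -sum1_card (partition_big f (mem T)) /=; last first.
    by move=> c Hc; apply: imset_f.
  apply: eq_bigr => t /imsetP [c0 Hc0 ->].
  rewrite sum1_card -(card_preimset K (addIr (f c0))); apply: eq_card => c.
  rewrite !inE; apply/andP/idP => [[Hc /eqP <-]|Hk].
    by rewrite addrC fP.
  split; first by rewrite -(vaddK c (f c0)) addrC; apply: CKadd => //; apply: fC.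
  by rewrite (feq _ (f c0) Hk) ffc.
have Kpos : (0 < #|K|)%N by apply/card_gt0P; exists 0.
have nT : n = #|T| by apply/eqP; rewrite -(eqn_pmul2r Kpos) -Hn cardC.
set t0 := f 0.
have t0T : t0 \in T by apply: imset_f.
have t0K : t0 \in K by have := fP 0; rewrite addr0.
have SB : (S <= W + \sum_(t in T :\ t0) <<t>>)%MS.
  apply: span_sub => c Hc.
  rewrite -(vaddK c (f c)); apply: addmx_sub.
    by apply: submx_trans (addsmxSl _ _); apply: csub_span; rewrite addrC fP.
  case: (eqVneq (f c) t0) => [->|ne].
    by apply: submx_trans (addsmxSl _ _); apply: csub_span.
  apply: submx_trans (addsmxSr _ _); apply: (sumsmx_sup (f c)).
    by rewrite !inE ne imset_f.
  by rewrite genmxE.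
rewrite leq_subLR nT; apply: leq_trans (mxrankS SB) _.
apply: leq_trans (mxrank_adds_leqif _ _) _; rewrite leq_add2l.
apply: leq_trans (rank_sum_le _) _.
by rewrite (cardsD1 t0 T) t0T add1n subn1.
Qed.

End P3.

Theorem lemma2p10 (m : nat) (C Cmax : {set 'rV['F_2]_m}) (n : nat) :
  (* Hypothesis 1 *)
  completely_transitive C ->
  (0%R : 'rV['F_2]_m) \in C ->
  (forall x y, x \in C -> y \in C -> x != y -> (5 <= hdist x y)%N) ->
  is_Cmax C Cmax ->
  (2 <= dim_code Cmax <= m - 2)%N ->
  (* further assumptions *)
  C != Cmax ->
  #|C| = (n * #|Cmax|)%N ->
  [/\ CAut C \subset CAut (cspan C),
      completely_transitive (cspan C) &
      (2 <= dim_code (cspan C) - dim_code Cmax <= n - 1)%N].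
Proof.
move=> CT C0 _ HK _ CK Hn; split.
- exact: part1.
- exact: part2.
- exact: part3 C0 HK CK Hn.
Qed.
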